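(* Let $k\ge1$ be an integer. Then $P_k(0,4,0)\not\equiv0\pmod p$ for every odd prime $p>k+2r-2$.
   Context: Fix an integer $r\ge1$ and indeterminates $\alpha,\beta,\gamma$. Define polynomials $c_n=c_n(\alpha,\beta,\gamma)\in\mathbb{Q}[\alpha,\beta,\gamma]$ by $c_n=0$ for $n<0$, $c_0=1$, and for every integer $n\ge-3$, $$(n+4)c_{n+4}+(2n+6-r)\alpha c_{n+3}+\left[(n+2-r)\alpha^2+(2n+5-2r)\frac{\alpha^2-\beta}{4}\right]c_{n+2}+\left[(2n+3-3r)\alpha\frac{\alpha^2-\beta}{4}+\frac{\gamma}{2}\right]c_{n+1}+\frac{1}{16}(\alpha^2-\beta)^2(n+1-2r)c_n=0.$$ For $k\ge1$ define $P_k(\alpha,\beta,\gamma):=\det\big(c_{k+2r-1+j-i}\big)_{1\le i,j\le k}$. $P_k(0,4,0)$ is its value at $\alpha=0,\beta=4,\gamma=0$, a rational number; $x\not\equiv0\pmod p$ means $x$ has denominator prime to $p$ and $x\notin p\mathbb{Z}_{(p)}$. *)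

(* Defs.v *)
From HB Require Import structures.
From mathcomp Require Import all_boot all_order all_algebra.
Set Implicit Arguments. Unset Strict Implicit. Unset Printing Implicit Defensive.
Import Order.TTheory GRing.Theory Num.Theory.
Local Open Scope ring_scope.

(* cs r a b g m = (c_m, c_{m-1}, c_{m-2}, c_{m-3}), with c_n = 0 for n < 0,
   c_0 = 1, and for m >= 1 (i.e. n = m - 4 >= -3) the recurrence solved
   for c_m = c_{n+4}, evaluated at alpha = a, beta = b, gamma = g. *)
Fixpoint cs (r : nat) (a b g : rat) (m : nat) : rat * rat * rat * rat :=
  match m with
  | 0 => (1, 0, 0, 0)
  | m'.+1 =>
    let '(x1, x2, x3, x4) := cs r a b g m' in
    let M : int := m'.+1%:Z in
    let R : int := r%:Z in
    let d := (a ^+ 2 - b) / 4 in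
    let new :=
      - (M%:~R)^-1 *
        ( ((2 * M - 2 - R)%:~R * a) * x1
        + ((M - 2 - R)%:~R * a ^+ 2 + (2 * M - 3 - 2 * R)%:~R * d) * x2
        + ((2 * M - 5 - 3 * R)%:~R * a * d + g / 2) * x3
        + ((M - 3 - 2 * R)%:~R * d ^+ 2) * x4 ) in
    (new, x1, x2, x3)
  end.

Definition c (r : nat) (a b g : rat) (n : int) : rat :=
  match n with
  | Posz m => (cs r a b g m).1.1.1
  | Negz _ => 0
  end.

Definition P (r k : nat) (a b g : rat) : rat :=
  \det (\matrix_(i < k, j < k)
          c r a b g (k%:Z + 2 * r%:Z - 1 + j%:Z - i%:Z)).

Definition not_zero_modp (p : nat) (x : rat) : bool :=
  ~~ (p%:Z %| denq x)%Z && ~~ (p%:Z %| numq x)%Z.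

(* Main.v *)
Require Import Defs.
From mathcomp Require Import all_boot all_order all_algebra all_fingroup.
From mathcomp Require Import zify ring lra.
Set Implicit Arguments. Unset Strict Implicit. Unset Printing Implicit Defensive.
Import Order.TTheory GRing.Theory Num.Theory.
Local Open Scope ring_scope.

Definition U (p : nat) (x : rat) := exists a b : int,
  [/\ ~~ (p%:Z %| a)%Z, ~~ (p%:Z %| b)%Z & x = a%:~R / b%:~R].

Lemma ndvdM (p : nat) (a b : int) : prime p ->
  ~~ (p%:Z %| a)%Z -> ~~ (p%:Z %| b)%Z -> ~~ (p%:Z %| a * b)%Z.
Proof. by move=> pp; rewrite !dvdzE abszM Euclid_dvdM // negb_or => -> ->. Qed.

Lemma U1 p : prime p -> U p 1.
Proof.
move=> pp; exists 1, 1; rewrite divr1; split => //; rewrite dvdzE /= Euclid_dvd1 //.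
Qed.

Lemma UM p x y : prime p -> U p x -> U p y -> U p (x * y).
Proof.
move=> pp [a [b [ha hb ->]]] [c [d [hc hd ->]]].
exists (a * c), (b * d); split; try exact: ndvdM.
by rewrite !intrM invfM; ring.
Qed.

Lemma UV p x : U p x -> U p x^-1.
Proof. by move=> [a [b [ha hb ->]]]; exists b, a; split => //; rewrite invf_div. Qed.

Lemma UN p x : U p x -> U p (- x).
Proof.
move=> [a [b [ha hb ->]]]; exists (- a), b; split => //.
  by rewrite dvdzE abszN -dvdzE.
by rewrite intrN mulNr.
Qed.

Lemma Usign p n : prime p -> U p ((-1) ^+ n).
Proof.
move=> pp; elim: n => [|n IH]; first exact: U1.
by rewrite exprS mulN1r; apply: UN.
Qed.

Lemma Uprod p (I : finType) (F : I -> rat) : prime p ->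
  (forall i, U p (F i)) -> U p (\prod_i F i).
Proof.
move=> pp H; apply: (big_ind (U p)) => //; first exact: U1.
by move=> x y; apply: UM.
Qed.

Lemma ndvd_small (p : nat) (z : int) : z != 0 -> (`|z| < p)%N -> ~~ (p%:Z %| z)%Z.
Proof.
move=> z0 zp; rewrite dvdzE /=; apply/negP => /dvdn_leq.
by rewrite absz_gt0 z0 => /(_ isT); rewrite leqNgt zp.
Qed.

Lemma Uint p (z : int) : prime p -> z != 0 -> (`|z| < p)%N -> U p z%:~R.
Proof.
move=> pp z0 zp; exists z, 1; split; first exact: ndvd_small.
  by rewrite dvdzE /= Euclid_dvd1.
by rewrite divr1.
Qed.

Lemma Uhalf p (z : int) : prime p -> odd p -> z != 0 -> (`|z| < p)%N ->
  U p (z%:~R / 2).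
Proof.
move=> pp op z0 zp; exists z, 2; split; first exact: ndvd_small.
  rewrite dvdzE /=; apply/negP => /dvdn_leq H.
  have := prime_gt1 pp; move: H op; case: p pp {zp} => [|[|[|p]]] //.
  by move=> _ /(_ isT).
by [].
Qed.

Lemma U_neq0 p x : U p x -> x != 0.
Proof.
move=> [a [b [ha hb ->]]]; rewrite mulf_eq0 invr_eq0 !intr_eq0 negb_or.
by apply/andP; split; apply/negP => /eqP E; [move: ha | move: hb]; rewrite E dvdz0.
Qed.

Lemma U_nz p x : prime p -> U p x -> not_zero_modp p x.
Proof.
move=> pp [a [b [ha hb E]]].
have E2 : numq x * b = a * denq x.
  apply/eqP; rewrite -(eqr_int rat) !intrM numqE E.
  have b0 : (b%:~R : rat) != 0 by rewrite intr_eq0; apply/negP => /eqP bz; move: hb; rewrite bz dvdz0.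
  by apply/eqP; field.
have cop := coprime_num_den x.
have np : forall n d : int, coprime `|n| `|d| -> (p%:Z %| n)%Z -> ~~ (p%:Z %| d)%Z.
  move=> n d c pn; apply/negP => pd; move: (prime_gt1 pp).
  have : (p %| gcdn `|n| `|d|)%N by rewrite dvdn_gcd; apply/andP; split; [exact: pn | exact: pd].
  by rewrite (eqP c) dvdn1 => /eqP ->.
rewrite /not_zero_modp; apply/andP; split; apply/negP => H.
- have : (p%:Z %| a * denq x)%Z by apply: dvdz_mull.
  rewrite -E2 dvdzE abszM Euclid_dvdM //; case/orP => H2.
    by move: (np _ _ cop H2); rewrite H.
  by move: hb; rewrite dvdzE H2.
- have : (p%:Z %| numq x * b)%Z by apply: dvdz_mulr.
  rewrite E2 dvdzE abszM Euclid_dvdM //; case/orP => H2.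
    by move: ha; rewrite dvdzE H2.
  by move: (np _ _ cop H); rewrite dvdzE H2.
Qed.


Definition ff (x : rat) (n : nat) : rat := \prod_(t < n) (x - t%:R).
Definition bin (x : rat) (n : nat) : rat := ff x n / (n`!)%:R.

Lemma ffS x n : ff x n.+1 = ff x n * (x - n%:R).
Proof. by rewrite /ff big_ord_recr. Qed.

Lemma ffSl x n : ff x n.+1 = x * ff (x - 1) n.
Proof.
rewrite /ff big_ord_recl subr0; congr (_ * _); apply: eq_bigr => t _.
by rewrite /= -[(bump 0 t)%:R]/(t.+1%:R) -addn1 natrD opprD addrA addrAC.
Qed.

Lemma ffD x a b : ff x (a + b) = ff x a * ff (x - a%:R) b.
Proof.
elim: b => [|b IH]; first by rewrite addn0 /ff big_ord0 mulr1.
by rewrite addnS !ffS IH natrD opprD addrA mulrA.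
Qed.

Lemma ff_fact n : ff n%:R n = (n`!)%:R.
Proof.
elim: n => [|n IH]; first by rewrite /ff big_ord0.
by rewrite ffSl factS natrM; congr (_ * _); rewrite -addn1 natrD addrK IH.
Qed.

Lemma fact_neq0 n : ((n`!)%:R : rat) != 0.
Proof. by rewrite pnatr_eq0 -lt0n fact_gt0. Qed.

Lemma pascal x n : bin (x + 1) n.+1 = bin x n.+1 + bin x n.
Proof.
rewrite /bin ffSl addrK ffS factS natrM.
have h1 := fact_neq0 n.
have h2 : (n.+1%:R : rat) != 0 by rewrite pnatr_eq0.
rewrite -addn1 natrD in h2 *.
by field; rewrite h1 h2.
Qed.

Lemma conv j : forall L x,
  bin (x + j%:R) (L + j) = \sum_(s < j.+1) ('C(j, s))%:R * bin x (L + s).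
Proof.
elim: j => [|j IH] L x.
  by rewrite big_ord1 addr0 addn0 bin0 mul1r.
rewrite -addn1 natrD addrA addn1 addnS pascal -addSn IH IH.
rewrite [in RHS]big_ord_recl /= bin0 addn0 mul1r.
have E : forall s : 'I_j.+1, 'C(j.+1, bump 0 s)%:R * bin x (L + bump 0 s) =
   'C(j, s)%:R * bin x (L.+1 + s) + 'C(j, s.+1)%:R * bin x (L + s.+1).
  by move=> s; rewrite /bump /= add1n binS natrD mulrDl addrC addSnnS.
rewrite (eq_bigr _ (fun s _ => E s)) big_split /= addrCA; congr (_ + _).
rewrite big_ord_recl /= bin0 addn0 mul1r; congr (_ + _).
rewrite [in RHS]big_ord_recr /= bin_small // mul0r addr0.
by apply: eq_bigr => s _; rewrite /bump /= add1n.
Qed.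

Lemma binq_sub x n i : (i <= n)%N -> ff (x - (n - i)%:R) i != 0 ->
  bin x (n - i) = (ff (x - (n - i)%:R) i)^-1 * ff n%:R i * bin x n.
Proof.
move=> le nz.
have En : n = ((n - i) + i)%N by rewrite subnK.
have Ef : ff n%:R n = ff n%:R i * ff (n - i)%:R (n - i).
  have -> : ff n%:R n = ff n%:R (i + (n - i)) by rewrite subnKC.
  by rewrite ffD natrB.
have nz2 : ff n%:R i != 0.
  by apply/negP => /eqP h; move: (fact_neq0 n); rewrite -ff_fact Ef h mul0r eqxx.
have Ex : ff x n = ff x (n - i) * ff (x - (n-i)%:R) i by rewrite -ffD subnK.
rewrite /bin Ex -(ff_fact n) Ef ff_fact.
by field; rewrite nz nz2 fact_neq0.
Qed.


Lemma detW n (a : 'rV[rat]_n) :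
  \det (\matrix_(i < n, j < n) ff (a 0 j) i) =
  \prod_(i < n) \prod_(j < n | (i < j)%N) (a 0 j - a 0 i).
Proof.
pose qq (i : nat) : {poly rat} := \prod_(t < i) ('X - (t%:R)%:P).
have sz i : size (qq i) = i.+1.
  by rewrite size_prod_XsubC /index_enum -enumT size_enum_ord.
have hq i y : (qq i).[y] = ff y i.
  by rewrite /qq horner_prod; apply: eq_bigr => t _; rewrite hornerXsubC.
pose L := \matrix_(i < n, k < n) (qq i)`_k.
have -> : \matrix_(i < n, j < n) ff (a 0 j) i = L *m Vandermonde n a.
  apply/matrixP => i j; rewrite !mxE -hq (@horner_coef_wide _ n); last by rewrite sz.
  by apply: eq_bigr => k _; rewrite !mxE.
rewrite det_mulmx det_Vandermonde det_trig.
  rewrite big1 ?mul1r // => i _; rewrite mxE.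
  have := lead_coef_prod_XsubC (index_enum 'I_i) xpredT (fun t : 'I_i => t%:R : rat).
  by rewrite lead_coefE -/(qq i) sz.
apply/is_trig_mxP => i k ik; rewrite mxE nth_default // sz.
exact: ik.
Qed.

Lemma detF (x : rat) (n M : nat) : (n <= M.+1)%N ->
  (forall i : 'I_n, ff (x - M%:R + i%:R) i != 0) ->
  \det (\matrix_(i < n, j < n) bin x (M + j - i)) =
  (\prod_(i < n) (ff (x - M%:R + i%:R) i)^-1) *
  (\prod_(i < n) \prod_(j < n | (i < j)%N) ((M + j)%:R - (M + i)%:R)) *
  (\prod_(j < n) bin (x + j%:R) (M + j)).
Proof.
move=> nM nz.
pose Ub := \matrix_(s < n, j < n) ('C(j, s))%:R : 'M[rat]_n.
have U1 : \det Ub = 1.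
  rewrite -det_tr det_trig; first by rewrite big1 // => i _; rewrite !mxE binn.
  by apply/is_trig_mxP => i k ik; rewrite !mxE bin_small.
pose d1 := \row_(i < n) (ff (x - M%:R + i%:R) i)^-1.
pose d2 := \row_(j < n) bin (x + j%:R) (M + j).
pose a := \row_(j < n) ((M + j)%:R : rat).
have E : \matrix_(i < n, j < n) bin x (M + j - i) *m Ub =
   diag_mx d1 *m \matrix_(i < n, j < n) ff (a 0 j) i *m diag_mx d2.
  apply/matrixP => i j; rewrite mul_mx_diag mul_diag_mx !mxE.
  have iM : (i <= M)%N by have := ltn_ord i; lia.
  have ij : (i <= M + j)%N by lia.
  have Ex : x + j%:R - (M + j - i)%:R = x - M%:R + i%:R.
    by rewrite natrB // natrD; ring.
  have := binq_sub (x := x + j%:R) ij; rewrite Ex => /(_ (nz i)) <-.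
  have -> : (M + j - i = (M - i) + j)%N by lia.
  rewrite conv (big_ord_widen n (fun s => 'C(j, s)%:R * bin x (M - i + s)) (ltn_ord j)).
  rewrite [RHS]big_mkcond /=; apply: eq_bigr => s _; rewrite !mxE.
  case: ifP => sj.
    by rewrite mulrC; congr (_ * bin x _); lia.
  by rewrite bin_small ?mulr0 //; lia.
have := congr1 determinant E.
rewrite !det_mulmx U1 mulr1 => ->.
rewrite detW !det_diag; congr (_ * _ * _); apply: eq_bigr => i _; rewrite ?mxE //.
by apply: eq_bigr => j _; rewrite !mxE.
Qed.


Definition al (r : nat) : rat := r%:R - 2^-1.

Lemma Ufac p (a b : nat) (y : rat) : prime p -> odd p ->
  y * 2 = a%:R - b%:R -> ~~ odd a -> odd b -> (a < p + b)%N -> (b < p + a)%N ->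
  U p y.
Proof.
move=> pp op E ea ob h1 h2.
have -> : y = ((a%:Z - b%:Z)%:~R) / 2.
  by rewrite intrB !pmulrn -!pmulrn -E; field.
apply: Uhalf => //; last by lia.
apply/negP => /eqP h; have ab : a = b by lia.
by move: ea; rewrite ab ob.
Qed.

Lemma Unat p (a : nat) : prime p -> (0 < a)%N -> (a < p)%N -> U p a%:R.
Proof.
move=> pp a0 ap; rewrite pmulrn; apply: Uint => //; lia.
Qed.

Lemma UdetF p r n M : prime p -> odd p -> (0 < n)%N -> (n <= M.+1)%N ->
  (M + n <= p)%N -> (2 * r + 2 * n < p + 3)%N -> (2 * M < p + 2 * r + 1)%N ->
  U p (\det (\matrix_(i < n, j < n) bin (al r) (M + j - i))).
Proof.
move=> pp op n0 nM h1 h2 h3.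
have Uff : forall i : 'I_n, U p (ff (al r - M%:R + i%:R) i).
  move=> i; apply: Uprod => // t.
  have := ltn_ord i; have := ltn_ord t => ti ii.
  apply: (@Ufac p (2 * r + 2 * i) (2 * M + 2 * t + 1)) => //; try lia.
  by rewrite !natrD /al; field.
rewrite detF //; last by move=> i; apply: U_neq0 (Uff i).
apply: UM => //; first apply: UM => //.
- by apply: Uprod => // i; apply: UV.
- apply: Uprod => // i; apply: (big_ind (U p)); first exact: U1.
    by move=> u v; apply: UM.
  move=> j ij; have -> : (M + j)%:R - (M + i)%:R = (j - i)%:R :> rat.
    by rewrite natrB ?natrD; [ring | lia].
  by apply: Unat => //; have := ltn_ord j; lia.
- apply: Uprod => // j; rewrite /bin; apply: UM => //; last apply: UV.
    apply: Uprod => // t; have := ltn_ord j; have := ltn_ord t => tj jj.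
    apply: (@Ufac p (2 * r + 2 * j) (2 * t + 1)) => //; try lia.
    by rewrite !natrD /al; field.
  rewrite -ff_fact; apply: Uprod => // t; have := ltn_ord j; have := ltn_ord t => tj jj.
  rewrite -natrB; last by lia.
  by apply: Unat => //; lia.
Qed.


Definition hz (r : nat) (z : int) : rat :=
  match z with
  | Posz n => if odd n then 0 else (-1) ^+ (n./2) * bin (al r) (n./2)
  | Negz _ => 0
  end.

Lemma binS1 x j : bin x j.+1 = bin x j * (x - j%:R) / (j.+1)%:R.
Proof.
rewrite /bin ffS factS natrM.
have h1 := fact_neq0 j.
have h2 : (j.+1%:R : rat) != 0 by rewrite pnatr_eq0.
by field; rewrite h1 andbT addrC natr1.
Qed.

Lemma hrec r q : (q + 4)%:R * hz r (q + 4)%N =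
  (2 * (q + 4)%:R - 3 - 2 * r%:R) * hz r (q + 2)%N
  - ((q + 4)%:R - 3 - 2 * r%:R) * hz r q.
Proof.
rewrite /hz.
have o4 : odd (q + 4) = odd q by rewrite oddD addbF.
have o2 : odd (q + 2) = odd q by rewrite oddD addbF.
rewrite o4 o2; case: ifP => oq; first by rewrite !mulr0 subrr.
have [j ->] : exists j, q = j.*2 by exists q./2; rewrite -{1}(odd_double_half q) oq.
have -> : ((j.*2 + 4)./2 = j.+2)%N by rewrite (_ : j.*2 + 4 = (j.+2).*2)%N ?doubleK // -!addnn; lia.
have -> : ((j.*2 + 2)./2 = j.+1)%N by rewrite (_ : j.*2 + 2 = (j.+1).*2)%N ?doubleK // -!addnn; lia.
rewrite doubleK !binS1 !exprS.
have h1 : (j.+1%:R : rat) != 0 by rewrite pnatr_eq0.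
have h2 : (j.+2%:R : rat) != 0 by rewrite pnatr_eq0.
move: h1 h2; rewrite -[j.*2]addnn !natrD -!natr1 /al => h1 h2.
by field; rewrite h1 h2.
Qed.

Lemma new_eq r (m : nat) (x1 x2 x3 x4 : rat) :
  let M : int := m.+1%:Z in
  let R : int := r%:Z in
  let d := ((0:rat) ^+ 2 - 4) / 4 in
  - (M%:~R)^-1 *
        ( ((2 * M - 2 - R)%:~R * 0) * x1
        + ((M - 2 - R)%:~R * 0 ^+ 2 + (2 * M - 3 - 2 * R)%:~R * d) * x2
        + ((2 * M - 5 - 3 * R)%:~R * 0 * d + 0 / 2) * x3
        + ((M - 3 - 2 * R)%:~R * d ^+ 2) * x4 ) =
  (m.+1%:R)^-1 * ((2 * m.+1%:R - 3 - 2 * r%:R) * x2 - (m.+1%:R - 3 - 2 * r%:R) * x4).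
Proof.
move=> M R d.
have hd : d = -1.
  by rewrite /d expr0n /= sub0r mulNr divff.
rewrite hd /M /R !intrB !intrM -!pmulrn.
ring.
Qed.

Lemma cs_closed r m : cs r 0 4 0 m =
  (hz r m, hz r (m%:Z - 1), hz r (m%:Z - 2), hz r (m%:Z - 3)).
Proof.
elim: m => [|m IH]; first by rewrite /= /hz /bin /ff big_ord0 /= expr0 mul1r fact0 div1r invr1.
rewrite [LHS]/= IH [LHS]/=.
have := new_eq r m (hz r m) (hz r (m%:Z - 1)) (hz r (m%:Z - 2)) (hz r (m%:Z - 3)).
move=> E; rewrite /= in E; rewrite E.
congr (_, _, _, _); last first.
  by have -> : (m.+1%:Z - 1 = m%:Z) by lia.
case: m IH E => [|[|[|q]]] IH E.
- by rewrite /= !mulr0 ?subrr ?mulr0.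
- by rewrite /hz /= /bin /ff big_ord0 big_ord1 /= /al; field.
- by rewrite /hz /=; ring.
have -> : (Posz q.+3 - 1 = Posz (q + 2)) by lia.
have -> : (Posz q.+3 - 3 = Posz q) by lia.
have H := hrec r q.
have -> : (q.+4 = q + 4)%N by rewrite addn4.
apply: (@mulfI _ (q + 4)%:R); first by rewrite pnatr_eq0 addn4.
rewrite H mulrA mulfV ?mul1r; last by rewrite pnatr_eq0 addn4.
by [].
Qed.

Lemma c_closed r z : c r 0 4 0 z = hz r z.
Proof. by case: z => [m|m] //=; rewrite cs_closed. Qed.


Lemma det_split (a b : nat) (f : nat -> nat -> rat) (rho ka : nat -> nat)
  (Hr : forall i, (i < a + b)%N -> (rho i < a + b)%N)
  (Hk : forall i, (i < a + b)%N -> (ka i < a + b)%N)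
  (Ir : forall i j, (i < a + b)%N -> (j < a + b)%N -> rho i = rho j -> i = j)
  (Ik : forall i j, (i < a + b)%N -> (j < a + b)%N -> ka i = ka j -> i = j)
  (Z : forall u v, (u < b)%N -> (v < a)%N -> f (rho (a + u)%N) (ka v) = 0) :
  exists e : nat,
  \det (\matrix_(i < a + b, j < a + b) f i j) =
  (-1) ^+ e * (\det (\matrix_(u < a, v < a) f (rho u) (ka v)) *
               \det (\matrix_(u < b, v < b) f (rho (a + u)%N) (ka (a + v)%N))).
Proof.
pose r' := fun i : 'I_(a + b) => Ordinal (@Hr i (ltn_ord i)).
pose k' := fun i : 'I_(a + b) => Ordinal (@Hk i (ltn_ord i)).
have ir : injective r'.
  move=> i j /(congr1 val) /= E; apply: val_inj; exact: Ir (ltn_ord i) (ltn_ord j) E.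
have ik : injective k'.
  move=> i j /(congr1 val) /= E; apply: val_inj; exact: Ik (ltn_ord i) (ltn_ord j) E.
pose s := perm ir; pose t := perm ik.
set A := \matrix_(i < a + b, j < a + b) f i j.
have EB : row_perm s (col_perm t A) =
  block_mx (\matrix_(u < a, v < a) f (rho u) (ka v))
           (\matrix_(u < a, v < b) f (rho u) (ka (a + v)%N)) 0
           (\matrix_(u < b, v < b) f (rho (a + u)%N) (ka (a + v)%N)).
  apply/matrixP => i j; rewrite !mxE !permE /=.
  case: (splitP i) => u Hu; rewrite !mxE; case: (splitP j) => v Hv; rewrite !mxE ?Hu ?Hv //.
  by rewrite Z.

exists (odd_perm s + odd_perm (t^-1)%g)%N.
have := congr1 determinant EB.
rewrite det_ublock row_permE col_permE !det_mulmx !det_perm => <-.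
by case: (odd_perm s) (odd_perm (t^-1)%g) => [] []; rewrite /= ?expr0 ?expr1 ?expr2; ring.
Qed.


Lemma hz_odd r (z : int) (w : int) : z = 2 * w + 1 -> hz r z = 0.
Proof.
case: z => [n|n] // E; rewrite /=.
by have -> : odd n by lia.
Qed.

Lemma hz_even r (z : int) (n : nat) : z = (2 * n)%N%:Z -> hz r z = (-1) ^+ n * bin (al r) n.
Proof.
move=> ->; rewrite /= oddM /=.
by rewrite mul2n doubleK.
Qed.

Lemma Usigned p r n M : prime p -> odd p -> (n <= M.+1)%N ->
  (M + n <= p)%N -> (2 * r + 2 * n < p + 3)%N -> (2 * M < p + 2 * r + 1)%N ->
  U p (\det (\matrix_(u < n, v < n) ((-1) ^+ (M + v - u) * bin (al r) (M + v - u)))).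
Proof.
move=> pp op h0 h1 h2 h3.
case: n h0 h1 h2 => [|n] h0 h1 h2; first by rewrite det_mx00; apply: U1.
pose d1 := \row_(u < n.+1) ((-1) ^+ u : rat).
pose d2 := \row_(v < n.+1) ((-1) ^+ (M + v) : rat).
have -> : \matrix_(u < n.+1, v < n.+1) ((-1) ^+ (M + v - u) * bin (al r) (M + v - u)) =
   diag_mx d1 *m \matrix_(u < n.+1, v < n.+1) bin (al r) (M + v - u) *m diag_mx d2.
  apply/matrixP => u v; rewrite mul_mx_diag mul_diag_mx !mxE.
  have uM : (u <= M + v)%N by have := ltn_ord u; lia.
  have -> : (M + v = (M + v - u) + u)%N by lia.
  rewrite addnK exprD.
  set x := (-1) ^+ u; set y := (-1) ^+ (M + v - u).
  have hx : x * x = 1 by rewrite /x -expr2 sqrr_sign.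
  transitivity (x * x * (y * bin (al r) (M + v - u))); first by rewrite hx mul1r.
  ring.
rewrite !det_mulmx !det_diag.
apply: UM => //; first apply: UM => //.
- by apply: Uprod => // i; rewrite mxE; apply: Usign.
- by apply: UdetF.
- by apply: Uprod => // i; rewrite mxE; apply: Usign.
Qed.

Lemma mat_eq r k :
  \matrix_(i < k, j < k) c r 0 4 0 (k%:Z + 2 * r%:Z - 1 + j%:Z - i%:Z) =
  \matrix_(i < k, j < k) (fun i j : nat => hz r (k%:Z + 2 * r%:Z - 1 + j%:Z - i%:Z)) i j.
Proof. by apply/matrixP => i j; rewrite !mxE c_closed. Qed.

Unset Implicit Arguments.

Theorem proposition4p3 (r k p : nat) :
  (1 <= r)%N -> (1 <= k)%N -> prime p -> odd p -> (k + 2 * r - 2 < p)%N ->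
  not_zero_modp p (P r k 0 4 0).
Proof.
move=> r1 k1 pp op kp; apply: U_nz => //.
rewrite /P mat_eq.
case: (boolP (odd k)) => ok.
- have [m Ek] : exists m, k = (m.+1 + m)%N by exists k./2; lia.
  subst k.
  pose rho := fun i : nat => if (i < m.+1)%N then (2 * i)%N else (2 * (i - m.+1) + 1)%N.
  have Hr : forall i, (i < m.+1 + m)%N -> (rho i < m.+1 + m)%N.
    by move=> i; rewrite /rho; case: ifP; lia.
  have Ir : forall i j, (i < m.+1 + m)%N -> (j < m.+1 + m)%N -> rho i = rho j -> i = j.
    by move=> i j; rewrite /rho; case: ifP; case: ifP; lia.
  have Z : forall u v, (u < m)%N -> (v < m.+1)%N ->
    (fun i j : nat => hz r ((m.+1 + m)%N%:Z + 2 * r%:Z - 1 + j%:Z - i%:Z))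
      (rho (m.+1 + u)%N) (rho v) = 0.
    move=> u v hu hv; rewrite /rho /=.
    rewrite (_ : (m.+1 + u < m.+1)%N = false); last by lia.
    rewrite hv; apply: (@hz_odd _ _ (m%:Z + r%:Z + v%:Z - u%:Z - 1)); lia.
  have [e ->] := det_split (f := fun i j : nat => hz r ((m.+1 + m)%N%:Z + 2 * r%:Z - 1 + j%:Z - i%:Z)) Hr Hr Ir Ir Z.
  apply: UM => //; first exact: Usign.
  apply: UM => //.
  + have -> : \matrix_(u < m.+1, v < m.+1)
       (fun i j : nat => hz r ((m.+1 + m)%N%:Z + 2 * r%:Z - 1 + j%:Z - i%:Z)) (rho u) (rho v)
      = \matrix_(u < m.+1, v < m.+1) ((-1) ^+ ((m + r) + v - u) * bin (al r) ((m + r) + v - u)).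
      apply/matrixP => u v; rewrite !mxE /rho /= !ltn_ord.
      apply: hz_even; have := ltn_ord u; have := ltn_ord v; lia.
    apply: Usigned => //; lia.
  + have -> : \matrix_(u < m, v < m)
       (fun i j : nat => hz r ((m.+1 + m)%N%:Z + 2 * r%:Z - 1 + j%:Z - i%:Z))
         (rho (m.+1 + u)%N) (rho (m.+1 + v)%N)
      = \matrix_(u < m, v < m) ((-1) ^+ ((m + r) + v - u) * bin (al r) ((m + r) + v - u)).
      apply/matrixP => u v; rewrite !mxE /rho /=.
      have e1 : (m.+1 + u < m.+1)%N = false by lia.
      have e2 : (m.+1 + v < m.+1)%N = false by lia.
      rewrite e1 e2.
      apply: hz_even; have := ltn_ord u; have := ltn_ord v; lia.
    apply: Usigned => //; lia.
- have [m Ek] : exists m, k = (m + m)%N by exists k./2; lia.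
  subst k.
  pose rho := fun i : nat => if (i < m)%N then (2 * i)%N else (2 * (i - m) + 1)%N.
  pose ka := fun i : nat => if (i < m)%N then (2 * i + 1)%N else (2 * (i - m))%N.
  have Hr : forall i, (i < m + m)%N -> (rho i < m + m)%N.
    by move=> i; rewrite /rho; case: ifP; lia.
  have Hk : forall i, (i < m + m)%N -> (ka i < m + m)%N.
    by move=> i; rewrite /ka; case: ifP; lia.
  have Ir : forall i j, (i < m + m)%N -> (j < m + m)%N -> rho i = rho j -> i = j.
    by move=> i j; rewrite /rho; case: ifP; case: ifP; lia.
  have Ik : forall i j, (i < m + m)%N -> (j < m + m)%N -> ka i = ka j -> i = j.
    by move=> i j; rewrite /ka; case: ifP; case: ifP; lia.
  have Z : forall u v, (u < m)%N -> (v < m)%N ->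
    (fun i j : nat => hz r ((m + m)%N%:Z + 2 * r%:Z - 1 + j%:Z - i%:Z))
      (rho (m + u)%N) (ka v) = 0.
    move=> u v hu hv; rewrite /rho /ka /=.
    have e1 : (m + u < m)%N = false by lia.
    rewrite e1 hv; apply: (@hz_odd _ _ (m%:Z + r%:Z + v%:Z - u%:Z - 1)); lia.
  have [e ->] := det_split (f := fun i j : nat => hz r ((m + m)%N%:Z + 2 * r%:Z - 1 + j%:Z - i%:Z)) Hr Hk Ir Ik Z.
  apply: UM => //; first exact: Usign.
  apply: UM => //.
  + have -> : \matrix_(u < m, v < m)
       (fun i j : nat => hz r ((m + m)%N%:Z + 2 * r%:Z - 1 + j%:Z - i%:Z)) (rho u) (ka v)
      = \matrix_(u < m, v < m) ((-1) ^+ ((m + r) + v - u) * bin (al r) ((m + r) + v - u)).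
      apply/matrixP => u v; rewrite !mxE /rho /ka /= !ltn_ord.
      apply: hz_even; have := ltn_ord u; have := ltn_ord v; lia.
    apply: Usigned => //; lia.
  + have -> : \matrix_(u < m, v < m)
       (fun i j : nat => hz r ((m + m)%N%:Z + 2 * r%:Z - 1 + j%:Z - i%:Z))
         (rho (m + u)%N) (ka (m + v)%N)
      = \matrix_(u < m, v < m) ((-1) ^+ ((m + r - 1) + v - u) * bin (al r) ((m + r - 1) + v - u)).
      apply/matrixP => u v; rewrite !mxE /rho /ka /=.
      have e1 : (m + u < m)%N = false by lia.
      have e2 : (m + v < m)%N = false by lia.
      rewrite e1 e2.
      apply: hz_even; have := ltn_ord u; have := ltn_ord v; lia.
    apply: Usigned => //; lia.
Qed.
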